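(* Let $K$ be an oriented knot in $\Sigma\times I$ with a diagram $D$, and let $m(K)$ be the knot whose diagram is obtained from $D$ by switching all crossings. Then for every oriented closed curve $\gamma$ on $\Sigma$ with $[\gamma]\in\mathcal{H}_1^K(\Sigma,\mathbb{Z})$, we have $W_{m(K)}^{\gamma}(t)=-W_K^{\gamma}(t^{-1})$.
   Context: $\Sigma$ is a closed oriented surface, $I=[0,1]$; a knot in $\Sigma\times I$ is an oriented smooth embedding of $S^1$, with diagram its projection to $\Sigma$ carrying over/under information; $C(D)$ is the set of crossings and $w(c)\in\{\pm1\}$ the writhe. $\mathcal{H}_1^K(\Sigma,\mathbb{Z})=\{\alpha\in H_1(\Sigma,\mathbb{Z}):\alpha\cdot[K]=0\}$, $\cdot$ the algebraic intersection number. For a diagram $D$ transverse to $\gamma$ away from crossings: points of $D\cap\gamma$ cut $D$ into arcs; $x\in D\cap\gamma$ is positive if (tangent of $\gamma$, tangent of $D$) is a positive basis of $T_x\Sigma$, negative otherwise; a coloring assigns integers to arcs increasing by one at positive and decreasing by one at negative points when walking along $D$ (exists, unique up to a constant); $f_\gamma(c)$ is the integer on the over-strand minus that on the under-strand at $c$. The writhe polynomial is $W_K^{\gamma}(t)=\sum_{c\in C(D),\,f_\gamma(c)\neq0}w(c)t^{f_\gamma(c)}$, depending only on $K$ and $[\gamma]$. *)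

(* Defs.v *)
(* Combinatorial model of a knot diagram D on Sigma together
   with a transverse closed curve gamma, recorded as the cyclic sequence of
   events met while walking once along D. *)
From mathcomp Require Import all_boot all_order all_algebra.
Set Implicit Arguments. Unset Strict Implicit. Unset Printing Implicit Defensive.
Import GRing.Theory Num.Theory.
Local Open Scope ring_scope.

(* An event met when walking along D starting from a base point:
   passing crossing c on its over-strand, on its under-strand, or
   crossing gamma at a point x of D ∩ gamma (true = positive point). *)
Inductive event (n : nat) : Type :=
  | Over of 'I_n
  | Under of 'I_n
  | Gam of bool.
Arguments Over {n}. Arguments Under {n}. Arguments Gam {n}.

Record diagram := Diagram {
  ncr : nat;
  walk : seq (event ncr);
  posw : 'I_ncr -> bool
}.

Definition is_over n (c : 'I_n) (e : event n) : bool :=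
  if e is Over d then d == c else false.
Definition is_under n (c : 'I_n) (e : event n) : bool :=
  if e is Under d then d == c else false.

Arguments posw : clear implicits.
Arguments walk : clear implicits.

Definition wf_diagram (D : diagram) : Prop :=
  forall c : 'I_(ncr D),
    count (is_over c) (walk D) = 1%N /\ count (is_under c) (walk D) = 1%N.

Definition ev_sign n (e : event n) : int :=
  if e is Gam b then (if b then 1 else -1) else 0.

(* algebraic intersection number [gamma] . [K] = signed count of D ∩ gamma *)
Definition gamma_int (D : diagram) : int := \sum_(e <- walk D) ev_sign e.

(* the coloring: the integer on the arc containing position i of the walk
   (normalised to 0 on the initial arc) *)
Definition color (D : diagram) (i : nat) : int :=
  \sum_(e <- take i (walk D)) ev_sign e.

Definition writhe (D : diagram) (c : 'I_(ncr D)) : int :=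
  if posw D c then 1 else -1.

Definition f_gamma (D : diagram) (c : 'I_(ncr D)) : int :=
  color D (find (is_over c) (walk D)) - color D (find (is_under c) (walk D)).

(* The writhe polynomial W^gamma_K(t), a Laurent polynomial represented by
   its coefficient function: Wcoef D k = coefficient of t^k. *)
Arguments writhe : clear implicits.
Arguments f_gamma : clear implicits.
Definition Wcoef (D : diagram) (k : int) : int :=
  if k == 0 then 0 else \sum_(c < ncr D | f_gamma D c == k) writhe D c.

Definition switch_event n (e : event n) : event n :=
  match e with Over c => Under c | Under c => Over c | Gam b => Gam b end.

Definition mirror (D : diagram) : diagram :=
  @Diagram (ncr D) (map (@switch_event _) (walk D)) (fun c => ~~ posw D c).

(* Main.v *)
Require Import Defs.
From mathcomp Require Import all_boot all_order all_algebra.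
Import GRing.Theory Num.Theory.
Local Open Scope ring_scope.

Lemma color_mirror (D : diagram) i : color (mirror D) i = color D i.
Proof.
rewrite /color /= -map_take big_map; apply: eq_bigr => -[c|c|b] _ //.
Qed.

Lemma f_gamma_mirror (D : diagram) c : f_gamma (mirror D) c = - f_gamma D c.
Proof.
rewrite /f_gamma !color_mirror /= !find_map.
have -> : find (preim (@switch_event _) (is_over c)) (walk D) = find (is_under c) (walk D).
  by apply: eq_find => -[d|d|b].
have -> : find (preim (@switch_event _) (is_under c)) (walk D) = find (is_over c) (walk D).
  by apply: eq_find => -[d|d|b].
by rewrite opprB.
Qed.

Theorem proposition3p4 (D : diagram) :
  wf_diagram D -> gamma_int D = 0 ->
  forall k : int, Wcoef (mirror D) k = - Wcoef D (- k).
Proof.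
move=> _ _ k; rewrite /Wcoef oppr_eq0; case: eqP => _; first by rewrite oppr0.
rewrite -sumrN; apply: eq_big => [c|c _].
  by rewrite f_gamma_mirror -eqr_oppLR.
by rewrite /writhe /=; case: (posw D c); rewrite ?opprK.
Qed.
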